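(* Let $n_1<n_2<n_3$ be positive integers with $\gcd(n_1,n_2,n_3)=1$ minimally generating a nonsymmetric numerical semigroup $S=\langle n_1,n_2,n_3\rangle$ with $|\Delta(S)|>1$ and $\min\Delta(S)=1$. If $\min\{\delta_1,\delta_3\}=1$, then $\Delta(S)=\{1,2,\ldots,\max\{\delta_1,\delta_3\}\}$.
   Context: $S=\{x_1n_1+x_2n_2+x_3n_3:x_i\in\mathbb N\}$; minimally generated means no $n_i$ lies in the submonoid generated by the other two; with $F=\max(\mathbb Z\setminus S)$, $S$ is symmetric if $x\in\mathbb Z\setminus S$ implies $F-x\in S$. For $\{i,j,k\}=\{1,2,3\}$, $c_i=\min\{c\in\mathbb Z^+: cn_i\in\langle n_j,n_k\rangle\}$, and (as $S$ is nonsymmetric) $r_{ij},r_{ik}$ are the unique positive integers with $c_in_i=r_{ij}n_j+r_{ik}n_k$. $\delta_1=c_1-r_{12}-r_{13}$, $\delta_3=r_{31}+r_{32}-c_3$. For $s\in S$, $\mathcal L(s)=\{x_1+x_2+x_3:(x_1,x_2,x_3)\in\mathbb N^3,\ \sum x_in_i=s\}=\{m_1<\dots<m_k\}$, $\Delta(s)=\{m_t-m_{t-1}:2\le t\le k\}$, and $\Delta(S)=\bigcup_{s\in S}\Delta(s)$. *)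

(* Defs.v *)
From mathcomp Require Import all_boot all_order all_algebra.
From mathcomp Require Import ssrint ssrnum.
Set Implicit Arguments. Unset Strict Implicit. Unset Printing Implicit Defensive.
Import Order.TTheory GRing.Theory Num.Theory.

Definition inS3 (n1 n2 n3 s : nat) : Prop :=
  exists x1 x2 x3 : nat, (x1 * n1 + x2 * n2 + x3 * n3)%N = s.

Definition inS2 (a b m : nat) : Prop :=
  exists x y : nat, (x * a + y * b)%N = m.

Definition inS3Z (n1 n2 n3 : nat) (z : int) : Prop :=
  exists s : nat, z = Posz s /\ inS3 n1 n2 n3 s.

Definition minimally_generated (n1 n2 n3 : nat) : Prop :=
  ~ inS2 n2 n3 n1 /\ ~ inS2 n1 n3 n2 /\ ~ inS2 n1 n2 n3.

Definition is_frobenius (n1 n2 n3 : nat) (F : int) : Prop :=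
  ~ inS3Z n1 n2 n3 F /\ (forall x : int, F < x -> inS3Z n1 n2 n3 x)%R.

Definition symmetric_sg (n1 n2 n3 : nat) : Prop :=
  forall F : int, is_frobenius n1 n2 n3 F ->
  forall x : int, ~ inS3Z n1 n2 n3 x -> inS3Z n1 n2 n3 (F - x)%R.

(* c is c_i for n_i = a, {n_j,n_k} = {b,d}:
   the least positive c with c*a in <b,d>. *)
Definition is_c (a b d c : nat) : Prop :=
  (0 < c)%N /\ inS2 b d (c * a) /\
  (forall c' : nat, (0 < c')%N -> inS2 b d (c' * a) -> (c <= c')%N).

Definition is_length (n1 n2 n3 s m : nat) : Prop :=
  exists x1 x2 x3 : nat,
    (x1 * n1 + x2 * n2 + x3 * n3)%N = s /\ (x1 + x2 + x3)%N = m.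

Definition in_Delta_s (n1 n2 n3 s d : nat) : Prop :=
  exists m m' : nat,
    is_length n1 n2 n3 s m /\ is_length n1 n2 n3 s m' /\ (m < m')%N /\
    (forall m'' : nat, is_length n1 n2 n3 s m'' -> ~ ((m < m'')%N /\ (m'' < m')%N)) /\
    d = (m' - m)%N.

Definition in_Delta_S (n1 n2 n3 d : nat) : Prop :=
  exists s : nat, inS3 n1 n2 n3 s /\ in_Delta_s n1 n2 n3 s d.

(* Main.v *)
Require Import Defs.
From mathcomp Require Import all_boot all_order all_algebra.
From mathcomp Require Import ssrint ssrnum zify ring.
From Stdlib Require Import Classical.
Import Order.TTheory GRing.Theory Num.Theory.
Set Implicit Arguments. Unset Strict Implicit.

Section Aux.
Local Open Scope ring_scope.

Lemma g2D (c1 r12 r13 c3 r31 r32 a b D : int) :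
  0 < r12 -> 0 < r13 -> 0 < r31 -> 0 < r32 -> r13 < c3 ->
  D = c1 - r12 - r13 -> 2 <= D -> r31 * D < c1 ->
  0 <= a * c1 - b * r31 -> 0 <= r12 - a * r12 - b * r32 -> 0 <= r13 - a * r13 + b * c3 ->
  ~ (0 < a * D - b < D).
Proof.
move=> *.
have [ha|ha] : 1 <= a \/ a <= 0 by lia.
  have hb : b <= 0 by nia.
  nia.
have hb : b <= 0 by nia.
have [a0|a1] : a = 0 \/ a <= -1 by lia.
  subst a. have : b = 0 by nia. nia.
have h1 : (- b) * r31 >= (- a) * c1 by nia.
have h2 : (- a) * c1 > (- a) * r31 * D by nia.
have h3 : (- b) > (- a) * D by nia.
have h4 : (- b) * c3 <= r13 * (1 - a) by nia.
have h5 : (- b) < 1 - a by nia.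
nia.
Qed.

(* case II, d = D - j, base (0, r12 + j r32, 0) *)
Lemma g2j (c1 r12 r13 c3 r31 r32 a b D j : int) :
  0 < r12 -> 0 < r13 -> 0 < r31 -> 0 < r32 -> r13 * r31 < c1 * c3 -> 0 < c1 -> 0 < c3 ->
  0 <= a * c1 - b * r31 -> 0 <= r12 + j * r32 - a * r12 - b * r32 -> 0 <= - a * r13 + b * c3 ->
  ~ (0 < a * D - b < D - j).
Proof.
move=> *.
have k1 : a * c1 * c3 >= b * r31 * c3 by nia.
have k2 : b * c3 * r31 >= a * r13 * r31 by nia.
have k3 : a * (c1 * c3 - r13 * r31) >= 0 by nia.
have ha : 0 <= a by nia.
have hb : 0 <= b by nia.
have [a0|a1] : a = 0 \/ 1 <= a by lia.
  subst a. have : b = 0 by nia. nia.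
have : b <= j by nia.
nia.
Qed.

(* case I, d = D, base (0, 0, c3) ; gain a - b D *)
Lemma g1D (c1 r12 r13 c3 r31 r32 a b D : int) :
  0 < r12 -> 0 < r13 -> 0 < r31 -> 0 < r32 -> r31 < c1 -> 1 <= D ->
  0 <= a * c1 - b * r31 -> 0 <= - a * r12 - b * r32 -> 0 <= c3 - a * r13 + b * c3 ->
  ~ (0 < a - b * D < D).
Proof.
move=> *.
have [hb|hb] : 0 <= b \/ b <= -1 by lia.
  have : 0 <= a by nia.
  have : a = 0 /\ b = 0 by nia. nia.
have : a > b by nia.
nia.
Qed.

(* case I, d = D - j, base (0, r32 + j r12, 0) which is the LONGER one; gain a - b D *)
Lemma g1j (c1 r12 r13 c3 r31 r32 a b D j : int) :
  0 < r12 -> 0 < r13 -> 0 < r31 -> 0 < r32 -> r13 * r31 < c1 * c3 -> 0 < c1 -> 0 < c3 ->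
  0 <= a * c1 - b * r31 -> 0 <= r32 + j * r12 - a * r12 - b * r32 -> 0 <= - a * r13 + b * c3 ->
  ~ (j - D < a - b * D < 0).
Proof.
move=> *.
have k1 : a * c1 * c3 >= b * r31 * c3 by nia.
have k2 : b * c3 * r31 >= a * r13 * r31 by nia.
have k3 : a * (c1 * c3 - r13 * r31) >= 0 by nia.
have ha : 0 <= a by nia.
have hb : 0 <= b by nia.
have [b0|b1] : b = 0 \/ 1 <= b by lia.
  subst b. have : a = 0 by nia. nia.
have : a <= j by nia.
nia.
Qed.

End Aux.

Section Main.
Variables n1 n2 n3 c1 r12 r13 c3 r31 r32 : nat.
Hypothesis hn1 : (0 < n1)%N.
Hypothesis h12 : (n1 < n2)%N.
Hypothesis h23 : (n2 < n3)%N.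
Hypothesis hc1 : is_c n1 n2 n3 c1.
Hypothesis hr12 : (0 < r12)%N.
Hypothesis hr13 : (0 < r13)%N.
Hypothesis e1 : (c1 * n1 = r12 * n2 + r13 * n3)%N.
Hypothesis hc3 : is_c n3 n1 n2 c3.
Hypothesis hr31 : (0 < r31)%N.
Hypothesis hr32 : (0 < r32)%N.
Hypothesis e3 : (c3 * n3 = r31 * n1 + r32 * n2)%N.

Lemma minc1 c' x y : (0 < c')%N -> (x * n2 + y * n3 = c' * n1)%N -> (c1 <= c')%N.
Proof. move=> h he; case: hc1 => _ [_ H]; apply: H => //; by exists x, y. Qed.
Lemma minc3 c' x y : (0 < c')%N -> (x * n1 + y * n2 = c' * n3)%N -> (c3 <= c')%N.
Proof. move=> h he; case: hc3 => _ [_ H]; apply: H => //; by exists x, y. Qed.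

Lemma d1pos : (r12 + r13 < c1)%N.
Proof. nia. Qed.
Lemma d3pos : (c3 < r31 + r32)%N.
Proof. nia. Qed.

Lemma r31c1 : (r31 < c1)%N.
Proof.
rewrite ltnNge; apply/negP => H.
have [H2|H2] := ltnP r13 c3.
  have := @minc3 (c3 - r13) (r31 - c1) (r12 + r32).
  move=> /(_ _ _); nia.
nia.
Qed.
Lemma r13c3 : (r13 < c3)%N.
Proof.
rewrite ltnNge; apply/negP => H.
have [H2|H2] := ltnP r31 c1.
  have := @minc1 (c1 - r31) (r12 + r32) (r13 - c3).
  move=> /(_ _ _); nia.
nia.
Qed.

Lemma cone : (r13 * r31 < c1 * c3)%N.
Proof.
have E : (c1 * c3 * n3 = r31 * r13 * n3 + (r31 * r12 + c1 * r32) * n2)%N.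
  have -> : (c1 * c3 * n3 = c1 * (c3 * n3))%N by ring.
  rewrite e3. have -> : (c1 * (r31 * n1 + r32 * n2) = r31 * (c1 * n1) + c1 * r32 * n2)%N by ring.
  rewrite e1; ring.
nia.
Qed.

Lemma F3a : (Posz r31 * (Posz c1 - Posz r12 - Posz r13) < Posz c1 * (Posz r31 + Posz r32 - Posz c3))%R.
Proof.
have E : (c1 * c3 * n3 = r31 * r13 * n3 + (r31 * r12 + c1 * r32) * n2)%N.
  have -> : (c1 * c3 * n3 = c1 * (c3 * n3))%N by ring.
  rewrite e3. have -> : (c1 * (r31 * n1 + r32 * n2) = r31 * (c1 * n1) + c1 * r32 * n2)%N by ring.
  rewrite e1; ring.
have hc := cone.
have L : (c1 * c3 - r31 * r13 < r31 * r12 + c1 * r32)%N.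
  rewrite ltnNge; apply/negP => H.
  have : ((r31 * r12 + c1 * r32) * n3 <= (c1 * c3 - r31 * r13) * n3)%N by apply: leq_mul.
  rewrite mulnBl. nia.
nia.
Qed.

Lemma F3b : (Posz r13 * (Posz r31 + Posz r32 - Posz c3) < Posz c3 * (Posz c1 - Posz r12 - Posz r13))%R.
Proof.
have E : (c1 * c3 * n1 = r31 * r13 * n1 + (c3 * r12 + r13 * r32) * n2)%N.
  have -> : (c1 * c3 * n1 = c3 * (c1 * n1))%N by ring.
  rewrite e1. have -> : (c3 * (r12 * n2 + r13 * n3) = r13 * (c3 * n3) + c3 * r12 * n2)%N by ring.
  rewrite e3; ring.
have hc := cone.
have L : (c3 * r12 + r13 * r32 < c1 * c3 - r31 * r13)%N.
  rewrite ltnNge; apply/negP => H.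
  have : ((c1 * c3 - r31 * r13) * n2 <= (c3 * r12 + r13 * r32) * n2)%N by apply: leq_mul.
  rewrite mulnBl. nia.
nia.
Qed.

Lemma C2min k : (0 < k)%N -> forall a b, (k * n2 = a * n1 + b * n3)%N -> (r12 + r32 <= k)%N.
Proof.
elim: k {-2}k (leqnn k) => [|K IH] k hk k0 a b E; first by lia.
case: (classic (exists k' a' b', (0 < k')%N /\ (k' < k)%N /\ (k' * n2 = a' * n1 + b' * n3)%N)).
  move=> [k' [a' [b' [h1 [h2 h3]]]]].
  have := IH k' ltac:(lia) h1 a' b' h3. lia.
move=> NM.
have NMk : forall k' a' b', (0 < k')%N -> (k' < k)%N -> (k' * n2 = a' * n1 + b' * n3)%N -> False.
  move=> k' a' b' h1 h2 h3; apply: NM; by exists k', a', b'.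
have S1 : (a < c1)%N.
  rewrite ltnNge; apply/negP => H.
  have [H2|H2] := ltnP r12 k.
    apply: (NMk (k - r12) (a - c1) (r13 + b)); nia.
  nia.
have S2 : (b < c3)%N.
  rewrite ltnNge; apply/negP => H.
  have [H2|H2] := ltnP r32 k.
    apply: (NMk (k - r32) (a + r31) (b - c3)); nia.
  nia.
have S3 : (0 < a)%N.
  case: (posnP a) => // a0; subst a.
  have := @minc3 b 0 k. move=> /(_ _ _). nia.
have S4 : (0 < b)%N.
  case: (posnP b) => // b0; subst b.
  have := @minc1 a k 0. move=> /(_ _ _). nia.
have S5 : (r32 < k)%N.
  rewrite ltnNge; apply/negP => H.
  have := @minc3 (c3 - b) (r31 + a) (r32 - k). move=> /(_ _ _). nia.
have S6 : (r12 < k)%N.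
  rewrite ltnNge; apply/negP => H.
  have := @minc1 (c1 - a) (r12 - k) (r13 + b). move=> /(_ _ _). nia.
have S7 : (c1 <= r31 + a)%N.
  apply: (@minc1 (r31 + a) (k - r32) (c3 - b)); nia.
have S8 : (c3 <= r13 + b)%N.
  apply: (@minc3 (r13 + b) (c1 - a) (k - r12)); nia.
nia.
Qed.

Definition T := (nat * nat * nat)%type.
Definition wt (x : T) : nat := (x.1.1 * n1 + x.1.2 * n2 + x.2 * n3)%N.
Definition len (x : T) : nat := (x.1.1 + x.1.2 + x.2)%N.
Definition rel (x y : T) (a b : int) : Prop :=
  (Posz y.1.1 = Posz x.1.1 + a * Posz c1 - b * Posz r31)%R /\
  (Posz y.1.2 = Posz x.1.2 - a * Posz r12 - b * Posz r32)%R /\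
  (Posz y.2 = Posz x.2 - a * Posz r13 + b * Posz c3)%R.
Definition small (a b : int) : Prop :=
  (a = 0 /\ (b = 1 \/ b = -1) \/ b = 0 /\ (a = 1 \/ a = -1) \/ a = b /\ (a = 1 \/ a = -1))%R.
Inductive chain : T -> T -> Prop :=
| ch0 x : chain x x
| chS x y z a b : rel x y a b -> small a b -> chain y z -> chain x z.
Arguments chS {x y z a b}.
Definition share (x y : T) : Prop :=
  (0 < x.1.1 /\ 0 < y.1.1 \/ 0 < x.1.2 /\ 0 < y.1.2 \/ 0 < x.2 /\ 0 < y.2)%N.
Definition D1 : nat := (c1 - r12 - r13)%N.
Definition D3 : nat := (r31 + r32 - c3)%N.

Lemma rel_wt x y a b : rel x y a b -> wt y = wt x.
Proof.
case: x => [[x1 x2] x3]; case: y => [[y1 y2] y3]; rewrite /rel /wt /= => [[E1 [E2 E3]]].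
suff: (Posz (y1 * n1 + y2 * n2 + y3 * n3) = Posz (x1 * n1 + x2 * n2 + x3 * n3))%R by case.
rewrite !PoszD !PoszM E1 E2 E3.
have e1' : (Posz c1 * Posz n1 = Posz r12 * Posz n2 + Posz r13 * Posz n3)%R.
  by rewrite -!PoszM -PoszD e1.
have e3' : (Posz c3 * Posz n3 = Posz r31 * Posz n1 + Posz r32 * Posz n2)%R.
  by rewrite -!PoszM -PoszD e3.
have -> : ((Posz x1 + a * Posz c1 - b * Posz r31) * Posz n1 + (Posz x2 - a * Posz r12 - b * Posz r32) * Posz n2 +
  (Posz x3 - a * Posz r13 + b * Posz c3) * Posz n3 =
  Posz x1 * Posz n1 + Posz x2 * Posz n2 + Posz x3 * Posz n3 +
  a * (Posz c1 * Posz n1 - (Posz r12 * Posz n2 + Posz r13 * Posz n3)) +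
  b * (Posz c3 * Posz n3 - (Posz r31 * Posz n1 + Posz r32 * Posz n2)))%R by ring.
by rewrite e1' e3' !subrr !mulr0 !addr0.
Qed.

Lemma rel_len x y a b : rel x y a b ->
  (Posz (len y) = Posz (len x) + a * (Posz c1 - Posz r12 - Posz r13) - b * (Posz r31 + Posz r32 - Posz c3))%R.
Proof.
case: x => [[x1 x2] x3]; case: y => [[y1 y2] y3]; rewrite /rel /len /= => [[E1 [E2 E3]]].
rewrite !PoszD E1 E2 E3; ring.
Qed.

Lemma rel_comp x y z a b a' b' : rel x y a b -> rel y z a' b' -> rel x z (a + a') (b + b').
Proof.
case: x => [[x1 x2] x3]; case: y => [[y1 y2] y3]; case: z => [[z1 z2] z3].
rewrite /rel /= => [[E1 [E2 E3]]] [F1 [F2 F3]].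
rewrite F1 F2 F3 E1 E2 E3; split; [|split]; ring.
Qed.

Lemma rel_sym x y a b : rel x y a b -> rel y x (- a) (- b).
Proof.
case: x => [[x1 x2] x3]; case: y => [[y1 y2] y3].
rewrite /rel /= => [[E1 [E2 E3]]].
rewrite E1 E2 E3; split; [|split]; ring.
Qed.

Definition addT (x e : T) : T := (x.1.1 + e.1.1, x.1.2 + e.1.2, x.2 + e.2)%N.

Lemma rel_shift x y e a b : rel x y a b -> rel (addT x e) (addT y e) a b.
Proof.
case: x => [[x1 x2] x3]; case: y => [[y1 y2] y3]; case: e => [[z1 z2] z3].
rewrite /rel /addT /= => [[E1 [E2 E3]]].
rewrite !PoszD E1 E2 E3; split; [|split]; ring.
Qed.

Lemma small_sym a b : small a b -> small (- a) (- b).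
Proof. rewrite /small; lia. Qed.

Lemma chain_trans x y z : chain x y -> chain y z -> chain x z.
Proof.
move=> H; elim: H z => [x0 z0 //|x0 y0 z0 a b R S _ IH] z H; exact: (chS R S (IH _ H)).
Qed.

Lemma chain_sym x y : chain x y -> chain y x.
Proof.
elim=> [x0|x0 y0 z0 a b R S _ IH]; first exact: ch0.
apply: (@chain_trans _ _ _ IH); exact: (chS (rel_sym R) (small_sym S) (ch0 x0)).
Qed.

Lemma chain_shift x y e : chain x y -> chain (addT x e) (addT y e).
Proof.
elim=> [x0|x0 y0 z0 a b R S _ IH]; first exact: ch0.
exact: (chS (rel_shift e R) S IH).
Qed.

Lemma chain_wt x y : chain x y -> wt y = wt x.
Proof. elim=> // x0 y0 z0 a b R _ _ ->; exact: rel_wt R. Qed.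

Lemma chain_rel x y : chain x y -> exists a b, rel x y a b.
Proof.
elim=> [x0|x0 y0 z0 a b R _ _ [a' [b' R']]].
  by exists 0%R, 0%R; rewrite /rel; split; [|split]; ring.
by exists (a + a')%R, (b + b')%R; apply: rel_comp R R'.
Qed.

Lemma share_sym x y : share x y -> share y x.
Proof. rewrite /share; lia. Qed.

Lemma share_chain s (IH : forall m, (m < s)%N -> forall x y, wt x = m -> wt y = m -> chain x y) x y :
  wt x = s -> wt y = s -> share x y -> chain x y.
Proof.
case: x => [[x1 x2] x3]; case: y => [[y1 y2] y3]; rewrite /share /wt /= => hx hy.
case => [[h1 h2]|[[h1 h2]|[h1 h2]]].
- have H := IH (s - n1)%N ltac:(nia) (x1.-1, x2, x3) (y1.-1, y2, y3) ltac:(rewrite /wt /=; nia) ltac:(rewrite /wt /=; nia).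
  have := chain_shift (1, 0, 0)%N H; rewrite /addT /= !addn0 !addn1 !prednK //.
- have H := IH (s - n2)%N ltac:(nia) (x1, x2.-1, x3) (y1, y2.-1, y3) ltac:(rewrite /wt /=; nia) ltac:(rewrite /wt /=; nia).
  have := chain_shift (0, 1, 0)%N H; rewrite /addT /= !addn0 !addn1 !prednK //.
- have H := IH (s - n3)%N ltac:(nia) (x1, x2, x3.-1) (y1, y2, y3.-1) ltac:(rewrite /wt /=; nia) ltac:(rewrite /wt /=; nia).
  have := chain_shift (0, 0, 1)%N H; rewrite /addT /= !addn0 !addn1 !prednK //.
Qed.

Lemma move1 x1 y2 y3 : (0 < x1)%N -> (0 < y2 \/ 0 < y3)%N -> (x1 * n1 = y2 * n2 + y3 * n3)%N ->
  exists x' a b, rel (x1, 0, 0)%N x' a b /\ small a b /\ share x' (0, y2, y3)%N.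
Proof.
move=> h1 h2 E.
have hc : (c1 <= x1)%N by apply: (@minc1 x1 y2 y3) => //; lia.
exists (x1 - c1, r12, r13)%N, (-1)%R, 0%R; rewrite /rel /small /share /=; lia.
Qed.

Lemma move3 x3 y1 y2 : (0 < x3)%N -> (0 < y1 \/ 0 < y2)%N -> (x3 * n3 = y1 * n1 + y2 * n2)%N ->
  exists x' a b, rel (0, 0, x3)%N x' a b /\ small a b /\ share x' (y1, y2, 0)%N.
Proof.
move=> h1 h2 E.
have hc : (c3 <= x3)%N by apply: (@minc3 x3 y1 y2) => //; lia.
exists (r31, r32, x3 - c3)%N, 0%R, (-1)%R; rewrite /rel /small /share /=; lia.
Qed.

Lemma move2 x2 y1 y3 : (0 < x2)%N -> (0 < y1 \/ 0 < y3)%N -> (x2 * n2 = y1 * n1 + y3 * n3)%N ->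
  exists x' a b, rel (0, x2, 0)%N x' a b /\ small a b /\ share x' (y1, 0, y3)%N.
Proof.
move=> h1 h2 E.
have hc := C2min h1 E.
have h31 := r31c1; have h13 := r13c3.
exists (c1 - r31, x2 - r12 - r32, c3 - r13)%N, 1%R, 1%R; rewrite /rel /small /share /=; lia.
Qed.

Lemma conn s : forall x y, wt x = s -> wt y = s -> chain x y.
Proof.
elim/ltn_ind: s => s IH.
have finx : forall x y x' a b, wt x = s -> wt y = s -> rel x x' a b -> small a b -> share x' y -> chain x y.
  move=> x y x' a b hx hy R S Sh.
  apply: (chS R S); apply: (share_chain IH) => //; rewrite (rel_wt R) //.
have finy : forall x y y' a b, wt x = s -> wt y = s -> rel y y' a b -> small a b -> share x y' -> chain x y.
  move=> x y y' a b hx hy R S Sh.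
  apply: (@chain_trans _ y'); first by apply: (share_chain IH) => //; rewrite (rel_wt R) //.
  exact: (chS (rel_sym R) (small_sym S) (ch0 y)).
move=> x y hx hy.
case: (classic (share x y)) => NS; first exact: (share_chain IH).
move: x y hx hy NS => [[x1 x2] x3] [[y1 y2] y3]; rewrite /wt /share /= => hx hy NS.
case: (posnP x1) => hx1.
- subst x1. case: (posnP x2) => hx2.
  + subst x2. case: (posnP x3) => hx3.
    * subst x3. have [-> [-> ->]] : y1 = 0 /\ y2 = 0 /\ y3 = 0 by nia.
      exact: ch0.
    * have y30 : y3 = 0 by lia. subst y3.
      have [x' [a [b [R [S Sh]]]]] := @move3 x3 y1 y2 hx3 ltac:(nia) ltac:(nia).
      by apply: (finx _ _ _ _ _ _ _ R S Sh); rewrite /wt /=.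
  + have y20 : y2 = 0 by lia. subst y2.
    case: (posnP x3) => hx3.
    * subst x3.
      have [x' [a [b [R [S Sh]]]]] := @move2 x2 y1 y3 hx2 ltac:(nia) ltac:(nia).
      by apply: (finx _ _ _ _ _ _ _ R S Sh); rewrite /wt /=.
    * have y30 : y3 = 0 by lia. subst y3.
      have [y' [a [b [R [S Sh]]]]] := @move1 y1 x2 x3 ltac:(nia) ltac:(nia) ltac:(nia).
      apply: (finy _ _ _ _ _ _ _ R S); rewrite /wt /= //. exact: share_sym.
- have y10 : y1 = 0 by lia. subst y1.
  case: (posnP x2) => hx2.
  + subst x2. case: (posnP x3) => hx3.
    * subst x3.
      have [x' [a [b [R [S Sh]]]]] := @move1 x1 y2 y3 hx1 ltac:(nia) ltac:(nia).
      by apply: (finx _ _ _ _ _ _ _ R S Sh); rewrite /wt /=.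
    * have y30 : y3 = 0 by lia. subst y3.
      have [y' [a [b [R [S Sh]]]]] := @move2 y2 x1 x3 ltac:(nia) ltac:(nia) ltac:(nia).
      apply: (finy _ _ _ _ _ _ _ R S); rewrite /wt /= //. exact: share_sym.
  + have y20 : y2 = 0 by lia. subst y2.
    have y30 : (y3 = 0 -> False) by nia.
    have [y' [a [b [R [S Sh]]]]] := @move3 y3 x1 x2 ltac:(lia) ltac:(nia) ltac:(nia).
    have x30 : x3 = 0 by lia. subst x3.
    apply: (finy _ _ _ _ _ _ _ R S); rewrite /wt /= //. exact: share_sym.
Qed.

Definition MM : nat := maxn D1 D3.

Lemma chain_bridge x y : chain x y -> forall t, (len x <= t < len y)%N ->
  exists z w, wt z = wt x /\ wt w = wt x /\ (len z <= t < len w)%N /\ (len w <= len z + MM)%N.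
Proof.
elim=> [x0 t|x0 y0 z0 a b R S C IH t]; first by lia.
move=> ht.
have [hy|hy] := leqP (len y0) t.
  have [z [w [h1 [h2 h3]]]] := IH t ltac:(lia).
  exists z, w; rewrite -(rel_wt R); split => //.
exists x0, y0; split => //; split; first exact: (rel_wt R).
split; first by lia.
have L := rel_len R. have p1 := d1pos; have p3 := d3pos.
rewrite /MM /D1 /D3. move: L.
case: S => [[-> [->|->]]|[[-> [->|->]]|[-> [->|->]]]]; lia.
Qed.

Lemma upper d : in_Delta_S n1 n2 n3 d -> (d <= MM)%N.
Proof.
move=> [s [_ [m [m' [[x1 [x2 [x3 [hx lx]]]] [[y1 [y2 [y3 [hy ly]]]] [hmm [NB ->]]]]]]]].
have C := @conn s (x1, x2, x3) (y1, y2, y3) hx hy.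
have [z [w [hz [hw [ht hM]]]]] := chain_bridge C (t := m) ltac:(rewrite /len /=; lia).
have : ~ ((m < len w)%N /\ (len w < m')%N).
  apply: NB; exists w.1.1, w.1.2, w.2; split => //.
  by move: hw; rewrite /wt /= hx.
lia.
Qed.

Lemma gap_up x0 y0 g : wt y0 = wt x0 -> len y0 = (len x0 + g)%N ->
  (forall a b : int, (0 <= Posz x0.1.1 + a * Posz c1 - b * Posz r31)%R ->
     (0 <= Posz x0.1.2 - a * Posz r12 - b * Posz r32)%R ->
     (0 <= Posz x0.2 - a * Posz r13 + b * Posz c3)%R ->
     ~ (0 < a * (Posz c1 - Posz r12 - Posz r13) - b * (Posz r31 + Posz r32 - Posz c3) < Posz g)%R) ->
  (0 < g)%N -> in_Delta_S n1 n2 n3 g.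
Proof.
move=> hw hl P hg.
exists (wt x0); split; first by exists x0.1.1, x0.1.2, x0.2.
exists (len x0), (len y0); split; first by exists x0.1.1, x0.1.2, x0.2.
split; first by exists y0.1.1, y0.1.2, y0.2; split; [exact: hw|].
split; first by lia.
split; last by lia.
move=> m [z1 [z2 [z3 [hz lz]]]].
have C := @conn (wt x0) x0 (z1, z2, z3) erefl hz.
have [a [b R]] := chain_rel C.
have L := rel_len R.
move: (R) => [E1 [E2 E3]].
have := P a b ltac:(simpl in E1; lia) ltac:(simpl in E2; lia) ltac:(simpl in E3; lia).
rewrite /len /= in L lz hl *. lia.
Qed.

Lemma gap_down x0 y0 g : wt y0 = wt x0 -> len y0 = (len x0 + g)%N ->
  (forall a b : int, (0 <= Posz y0.1.1 + a * Posz c1 - b * Posz r31)%R ->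
     (0 <= Posz y0.1.2 - a * Posz r12 - b * Posz r32)%R ->
     (0 <= Posz y0.2 - a * Posz r13 + b * Posz c3)%R ->
     ~ (- Posz g < a * (Posz c1 - Posz r12 - Posz r13) - b * (Posz r31 + Posz r32 - Posz c3) < 0)%R) ->
  (0 < g)%N -> in_Delta_S n1 n2 n3 g.
Proof.
move=> hw hl P hg.
exists (wt x0); split; first by exists x0.1.1, x0.1.2, x0.2.
exists (len x0), (len y0); split; first by exists x0.1.1, x0.1.2, x0.2.
split; first by exists y0.1.1, y0.1.2, y0.2; split; [exact: hw|].
split; first by lia.
split; last by lia.
move=> m [z1 [z2 [z3 [hz lz]]]].
have C := @conn (wt x0) y0 (z1, z2, z3) hw hz.
have [a [b R]] := chain_rel C.
have L := rel_len R.
move: (R) => [E1 [E2 E3]].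
have := P a b ltac:(simpl in E1; lia) ltac:(simpl in E2; lia) ltac:(simpl in E3; lia).
rewrite /len /= in L lz hl *. lia.
Qed.

Lemma main_sec (H1 : in_Delta_S n1 n2 n3 1) (Hge1 : forall d : nat, in_Delta_S n1 n2 n3 d -> (1 <= d)%N)
  (hmin : Num.min ((Posz c1) - (Posz r12) - (Posz r13))%R ((Posz r31) + (Posz r32) - (Posz c3))%R = 1%R)
  (d : nat) :
  in_Delta_S n1 n2 n3 d <-> ((1 <= d)%N /\ ((Posz d) <= Num.max ((Posz c1) - (Posz r12) - (Posz r13))%R ((Posz r31) + (Posz r32) - (Posz c3))%R)%R).
Proof.
have p1 := d1pos; have p3 := d3pos.
split.
  move=> HD; split; first exact: Hge1 HD.
  have := upper HD; rewrite /MM /D1 /D3; lia.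
move=> [hd hM].
case: (eqVneq d 1) => [->|hd1]; first exact: H1.
have h31 := r31c1; have h13 := r13c3; have hcone := cone.
have [case1|case2] : (Posz c1 - Posz r12 - Posz r13 = 1 \/ Posz r31 + Posz r32 - Posz c3 = 1)%R by lia.
-
  have hF := F3b; rewrite case1 mulr1 in hF.
  have [hdD|hdD] : (d = r31 + r32 - c3 \/ d < r31 + r32 - c3)%N by lia.
  + apply: (@gap_up (0, 0, c3)%N (r31, r32, 0)%N d); rewrite /wt /len /= //; try lia.
    move=> a b ha hb hc; rewrite case1 mulr1.
    have -> : Posz d = (Posz r31 + Posz r32 - Posz c3)%R by lia.
    apply: (@g1D c1 r12 r13 c3 r31 r32 a b (Posz r31 + Posz r32 - Posz c3)); lia.
  + set j := (r31 + r32 - c3 - d)%N.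
    have hj1 : (1 <= j)%N by lia.
    have hjd : (j + d = r31 + r32 - c3)%N by rewrite /j; lia.
    clearbody j.
    have hjc1 : (r31 <= j * c1)%N.
      have : (c1 <= j * c1)%N by rewrite leq_pmull.
      lia.
    have hjc3 : (j * r13 <= c3)%N.
      have hD : (Posz r31 + Posz r32 - Posz c3 = Posz (r31 + r32 - c3)%N)%R by lia.
      rewrite hD -PoszM ltz_nat in hF.
      have : (j * r13 <= (r31 + r32 - c3) * r13)%N by apply: leq_mul => //; lia.
      lia.
    have ec1 : (c1 = r12 + r13 + 1)%N by lia.
    apply: (@gap_down (j * c1 - r31, 0, c3 - j * r13)%N (0, r32 + j * r12, 0)%N d); rewrite /wt /len /=.
    * rewrite !mul0n !addn0 add0n mulnBl mulnBl.
      have E1 : (j * c1 * n1 = j * r12 * n2 + j * r13 * n3)%N by rewrite -mulnA e1; ring.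
      have : (r31 * n1 <= j * c1 * n1)%N by apply: leq_mul.
      have : (j * r13 * n3 <= c3 * n3)%N by apply: leq_mul.
      lia.
    * have : (j * c1 = j * r12 + j * r13 + j)%N by rewrite ec1; ring.
      lia.
    2: lia.
    move=> a b ha hb hc; rewrite case1 mulr1.
    have -> : (- Posz d = Posz j - (Posz r31 + Posz r32 - Posz c3))%R by lia.
    apply: (@g1j c1 r12 r13 c3 r31 r32 a b (Posz r31 + Posz r32 - Posz c3) (Posz j)); lia.
-
  have hF := F3a; rewrite case2 mulr1 in hF.
  have [hdD|hdD] : (d = c1 - r12 - r13 \/ d < c1 - r12 - r13)%N by lia.
  + apply: (@gap_up (0, r12, r13)%N (c1, 0, 0)%N d); rewrite /wt /len /= //; try lia.
    move=> a b ha hb hc; rewrite case2 mulr1.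
    have -> : Posz d = (Posz c1 - Posz r12 - Posz r13)%R by lia.
    apply: (@g2D c1 r12 r13 c3 r31 r32 a b (Posz c1 - Posz r12 - Posz r13)); lia.
  + set j := (c1 - r12 - r13 - d)%N.
    have hj1 : (1 <= j)%N by lia.
    have hjd : (j + d = c1 - r12 - r13)%N by rewrite /j; lia.
    clearbody j.
    have hjc1 : (j * r31 <= c1)%N.
      have hD : (Posz c1 - Posz r12 - Posz r13 = Posz (c1 - r12 - r13)%N)%R by lia.
      rewrite hD mulrC -PoszM ltz_nat in hF.
      have : (j * r31 <= (c1 - r12 - r13) * r31)%N by apply: leq_mul => //; lia.
      lia.
    have hjc3 : (r13 <= j * c3)%N.
      have : (c3 <= j * c3)%N by rewrite leq_pmull.
      lia.
    have ec3 : (c3 + 1 = r31 + r32)%N by lia.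
    apply: (@gap_up (0, r12 + j * r32, 0)%N (c1 - j * r31, 0, j * c3 - r13)%N d); rewrite /wt /len /=.
    * rewrite !mul0n !addn0 add0n mulnBl mulnBl.
      have E3 : (j * c3 * n3 = j * r31 * n1 + j * r32 * n2)%N by rewrite -mulnA e3; ring.
      have : (j * r31 * n1 <= c1 * n1)%N by apply: leq_mul.
      have : (r13 * n3 <= j * c3 * n3)%N by apply: leq_mul.
      lia.
    * have : (j * c3 + j = j * r31 + j * r32)%N by rewrite -mulnDr -ec3; ring.
      lia.
    2: lia.
    move=> a b ha hb hc; rewrite case2 mulr1.
    have -> : (Posz d = (Posz c1 - Posz r12 - Posz r13) - Posz j)%R by lia.
    apply: (@g2j c1 r12 r13 c3 r31 r32 a b (Posz c1 - Posz r12 - Posz r13) (Posz j)); lia.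
Qed.
End Main.

Unset Implicit Arguments. Set Strict Implicit.
Theorem corollary2p21 (n1 n2 n3 : nat) (c1 r12 r13 c3 r31 r32 : nat) :
  (0 < n1)%N -> (n1 < n2)%N -> (n2 < n3)%N ->
  gcdn (gcdn n1 n2) n3 = 1%N ->
  minimally_generated n1 n2 n3 ->
  ~ symmetric_sg n1 n2 n3 ->
  (* |Delta(S)| > 1 *)
  (exists d d' : nat, d <> d' /\ in_Delta_S n1 n2 n3 d /\ in_Delta_S n1 n2 n3 d') ->
  (* min Delta(S) = 1 *)
  in_Delta_S n1 n2 n3 1 ->
  (forall d : nat, in_Delta_S n1 n2 n3 d -> (1 <= d)%N) ->
  (* c_1, r_12, r_13 *)
  is_c n1 n2 n3 c1 -> (0 < r12)%N -> (0 < r13)%N ->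
  (c1 * n1 = r12 * n2 + r13 * n3)%N ->
  (* c_3, r_31, r_32 *)
  is_c n3 n1 n2 c3 -> (0 < r31)%N -> (0 < r32)%N ->
  (c3 * n3 = r31 * n1 + r32 * n2)%N ->
  let delta1 : int := ((Posz c1) - (Posz r12) - (Posz r13))%R in
  let delta3 : int := ((Posz r31) + (Posz r32) - (Posz c3))%R in
  Num.min delta1 delta3 = 1%R ->
  forall d : nat,
    in_Delta_S n1 n2 n3 d <-> ((1 <= d)%N /\ ((Posz d) <= Num.max delta1 delta3)%R).
Proof.
move=> hn1 h12 h23 _ _ _ _ H1 Hge1 hc1 hr12 hr13 e1 hc3 hr31 hr32 e3 delta1 delta3 hmin d.
exact: (main_sec hn1 h12 h23 hc1 hr12 hr13 e1 hc3 hr31 hr32 e3 H1 Hge1 hmin d).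
Qed.
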